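(* Let $a>0$ and $0<h<\frac{\pi}{2a}$. For each integer $m\ge2$, let $\alpha_m$ be the $m$-th positive solution $q$ (in increasing order) of $\tan(hq)=\frac{2aq}{q^2-a^2}$. Then $\alpha_m\in\left[\frac{(m-1)\pi}{h},\frac{(m-1)\pi}{h}+\frac{\pi}{2h}\right]$ for all $m\ge2$. *)

(* Defs.v *)
From Stdlib Require Export Reals Lra List.
Open Scope R_scope.

(* q is a positive solution of tan(h q) = 2 a q / (q^2 - a^2):
   both sides must be defined, i.e. cos(h q) <> 0 and q^2 <> a^2. *)
Definition is_pos_sol (a h q : R) : Prop :=
  0 < q /\ cos (h * q) <> 0 /\ q ^ 2 - a ^ 2 <> 0 /\
  tan (h * q) = 2 * a * q / (q ^ 2 - a ^ 2).

(* alpha is the m-th positive solution in increasing order (m >= 1):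
   it is a solution and exactly m-1 solutions are strictly smaller. *)
Definition is_mth_pos_sol (a h : R) (m : nat) (alpha : R) : Prop :=
  is_pos_sol a h alpha /\
  exists l : list R, NoDup l /\ length l = (m - 1)%nat /\
    forall q, In q l <-> (is_pos_sol a h q /\ q < alpha).

(* Main.v *)
Require Import Defs.
From Stdlib Require Import Reals List.
From Stdlib Require Import Lra Lia ZArith.
Open Scope R_scope.

Lemma shift k t : sin (t + INR k * PI) = (-1)^k * sin t /\ cos (t + INR k * PI) = (-1)^k * cos t.
Proof.
  induction k as [|k [IH1 IH2]].
  - simpl. rewrite Rmult_0_l, Rplus_0_r. split; ring.
  - rewrite S_INR. replace (t + (INR k + 1) * PI) with ((t + INR k * PI) + PI) by ring.
    rewrite neg_sin, neg_cos, IH1, IH2. simpl. split; ring.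
Qed.

Lemma sign_sq k : (-1)^k * (-1)^k = 1.
Proof. rewrite <- pow_add. replace (k+k)%nat with (2*k)%nat by lia. rewrite pow_mult. simpl. rewrite Rmult_1_r.
 replace (-1 * -1) with 1 by ring. apply pow1. Qed.

Lemma sol_iff a h q k : is_pos_sol a h q <->
  (0 < q /\ cos (h*q - INR k * PI) <> 0 /\ q^2 - a^2 <> 0 /\
   sin (h*q - INR k * PI) * (q^2 - a^2) = 2*a*q*cos (h*q - INR k*PI)).
Proof.
  set (t := h*q - INR k * PI).
  assert (E: h*q = t + INR k * PI) by (unfold t; ring).
  destruct (shift k t) as [S C]. pose proof (sign_sq k) as SS.
  unfold is_pos_sol, tan. rewrite E, S, C.
  set (e := (-1)^k) in *.
  assert (e <> 0) by (intro Z; rewrite Z in SS; lra).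
  split; intros [H1 [H2 [H3 H4]]]; repeat split; auto.
  - intro Z; apply H2; rewrite Z; ring.
  - assert (Hc: cos t <> 0) by (intro Z; apply H2; rewrite Z; ring).
    replace (e * sin t / (e * cos t)) with (sin t / cos t) in H4 by (field; auto).
    apply (f_equal (fun x => x * cos t * (q^2 - a^2))) in H4.
    field_simplify in H4; auto. lra.
  - replace (e * sin t / (e * cos t)) with (sin t / cos t) by (field; auto). field_simplify_eq; auto. lra.
Qed.

Lemma floor_nat x : 0 < x -> exists k : nat, INR k * PI <= x < INR k * PI + PI.
Proof.
  intros Hx. pose proof PI_RGT_0 as HP.
  destruct (archimed (x / PI)) as [H1 H2].
  set (z := up (x/PI)) in *.
  assert (Hz: (0 < z)%Z). { apply lt_IZR. assert (0 < x/PI) by (apply Rdiv_lt_0_compat; lra). lra. }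
  exists (Z.to_nat (z - 1)).
  rewrite INR_IZR_INZ, Z2Nat.id by lia. rewrite minus_IZR.
  assert (x = (x/PI) * PI) by (field; lra).
  split; nra.
Qed.

Section S.
Variables a h : R.
Hypothesis ha : 0 < a.
Hypothesis hh0 : 0 < h.
Hypothesis hah : a * h < PI / 2.

Lemma solA q : is_pos_sol a h q -> exists k : nat, INR k * PI < h * q < INR k * PI + PI / 2.
Proof.
  intros Hs. assert (Hq: 0 < q) by apply Hs.
  destruct (floor_nat (h*q)) as [k [Hk1 Hk2]]. { nra. }
  exists k. apply (sol_iff a h q k) in Hs. destruct Hs as [_ [Hc [Hd He]]].
  set (t := h * q - INR k * PI) in *.
  assert (t = 0 \/ 0 < t < PI/2 \/ t = PI/2 \/ PI/2 < t < PI) as [T|[T|[T|T]]] by (unfold t; lra).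
  - rewrite T, sin_0, cos_0 in He. nra.
  - unfold t in T; lra.
  - rewrite T, cos_PI2 in Hc. tauto.
  - assert (sin t > 0) by (apply sin_gt_0; lra).
    assert (cos t < 0) by (apply cos_lt_0; lra).
    assert (h * q > PI/2). { assert (0 <= INR k * PI) by (apply Rmult_le_pos; [apply pos_INR|lra]). unfold t in T; lra. }
    assert (q > a) by nra.
    assert (q^2 - a^2 > 0) by nra.
    assert (sin t * (q^2-a^2) > 0) by (apply Rmult_lt_0_compat; lra).
    assert (2*a*q > 0) by nra.
    assert (2*a*q*cos t < 0) by nra.
    lra.
Qed.
End S.

Lemma gdec a x y : 0 < a -> a < x -> x < y -> 2*a*y/(y^2-a^2) < 2*a*x/(x^2-a^2).
Proof.
  intros. assert (D1: x^2-a^2 > 0) by nra. assert (D2: y^2-a^2>0) by nra.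
  apply Rminus_gt_0_lt.
  replace (2*a*x/(x^2-a^2) - 2*a*y/(y^2-a^2)) with (2*a*((y-x)*(x*y+a^2)) / ((x^2-a^2)*(y^2-a^2))) by (field; lra).
  apply Rdiv_lt_0_compat; [|nra]. apply Rmult_lt_0_compat; [lra|]. apply Rmult_lt_0_compat; nra.
Qed.

Section S2.
Variables a h : R.
Hypothesis ha : 0 < a.
Hypothesis hh0 : 0 < h.
Hypothesis hah : a * h < PI / 2.

Lemma branch q k : is_pos_sol a h q -> INR k * PI < h * q < INR k * PI + PI / 2 ->
  let t := h*q - INR k * PI in 0 < t < PI/2 /\ a < q /\ tan t = 2*a*q/(q^2-a^2).
Proof.
  intros Hs Hk t. apply (sol_iff a h q k) in Hs. destruct Hs as [Hq [Hc [Hd He]]]. fold t in Hc, He.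
  assert (T: 0 < t < PI/2) by (unfold t; lra).
  assert (sin t > 0) by (apply sin_gt_0; lra).
  assert (cos t > 0) by (apply cos_gt_0; lra).
  assert (sin t * (q^2-a^2) > 0) by (rewrite He; repeat apply Rmult_lt_0_compat; lra).
  assert (q^2 - a^2 > 0). { destruct (Rlt_or_le 0 (q^2-a^2)); auto. nra. }
  split; auto. split. nra.
  unfold tan. field_simplify_eq; try lra.
Qed.

Lemma solC q1 q2 k : is_pos_sol a h q1 -> is_pos_sol a h q2 ->
  INR k * PI < h * q1 < INR k * PI + PI / 2 -> INR k * PI < h * q2 < INR k * PI + PI / 2 -> q1 = q2.
Proof.
  intros S1 S2 K1 K2.
  destruct (branch q1 k S1 K1) as [T1 [A1 E1]].
  destruct (branch q2 k S2 K2) as [T2 [A2 E2]].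
  assert (PI > 0) by apply PI_RGT_0.
  destruct (Rtotal_order q1 q2) as [L|[L|L]]; auto; exfalso.
  - pose proof (tan_increasing (h*q1 - INR k * PI) (h*q2 - INR k*PI)) as TI.
    rewrite E1, E2 in TI. pose proof (gdec a q1 q2 ha A1 L).
    assert (U1: - PI / 2 < h * q1 - INR k * PI) by lra.
    assert (U2: h * q1 - INR k * PI < h * q2 - INR k * PI) by nra.
    specialize (TI U1 U2 (proj2 T2)). lra.
  - pose proof (tan_increasing (h*q2 - INR k * PI) (h*q1 - INR k*PI)) as TI.
    rewrite E1, E2 in TI. pose proof (gdec a q2 q1 ha A2 L).
    assert (U1: - PI / 2 < h * q2 - INR k * PI) by lra.
    assert (U2: h * q2 - INR k * PI < h * q1 - INR k * PI) by nra.
    specialize (TI U1 U2 (proj2 T1)). lra.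
Qed.
End S2.

Section S3.
Variables a h : R.
Hypothesis ha : 0 < a.
Hypothesis hh0 : 0 < h.
Hypothesis hah : a * h < PI / 2.

Definition G (k : nat) (q : R) := sin (h*q - INR k * PI) * (q^2 - a^2) - 2*a*q*cos (h*q - INR k * PI).

Lemma G_cont k : continuity (G k).
Proof. unfold G. reg. Qed.

Lemma solB_aux k L : INR k * PI <= h * L < INR k * PI + PI / 2 -> G k L < 0 ->
  exists q, is_pos_sol a h q /\ INR k * PI < h * q < INR k * PI + PI / 2.
Proof.
  intros HL GL. pose proof PI_RGT_0 as HP.
  assert (Hk0: 0 <= INR k * PI) by (apply Rmult_le_pos; [apply pos_INR|lra]).
  set (R0 := (INR k * PI + PI/2)/h).
  assert (HR: h * R0 = INR k * PI + PI/2) by (unfold R0; field; lra).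
  assert (LR: L < R0) by nra.
  assert (GR: 0 < G k R0).
  { unfold G. replace (h * R0 - INR k * PI) with (PI/2) by lra. rewrite sin_PI2, cos_PI2.
    assert (a < R0) by nra. nra. }
  destruct (IVT (G k) L R0 (G_cont k) LR GL GR) as [z [[Z1 Z2] GZ]].
  assert (zL: L <> z) by (intro E; subst; lra).
  assert (zR: z <> R0) by (intro E; subst; lra).
  assert (Hz: INR k * PI < h * z < INR k * PI + PI / 2).
  { split. assert (h*L < h*z) by (apply Rmult_lt_compat_l; lra). lra.
    assert (h*z < h*R0) by (apply Rmult_lt_compat_l; lra). lra. }
  exists z. split; auto.
  apply (sol_iff a h z k).
  set (t := h * z - INR k * PI) in *.
  assert (T: 0 < t < PI/2) by (unfold t; lra).
  assert (sin t > 0) by (apply sin_gt_0; lra).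
  assert (cos t > 0) by (apply cos_gt_0; lra).
  assert (z > 0) by nra.
  unfold G in GZ; fold t in GZ.
  assert (E: sin t * (z^2-a^2) = 2*a*z*cos t) by lra.
  split; auto. split; [lra|]. split; auto.
  intro D. rewrite D, Rmult_0_r in E.
  assert (2*a*z*cos t > 0) by (repeat apply Rmult_lt_0_compat; lra). lra.
Qed.

Lemma solB k : exists q, is_pos_sol a h q /\ INR k * PI < h * q < INR k * PI + PI / 2.
Proof.
  pose proof PI_RGT_0 as HP.
  destruct k as [|k].
  - apply (solB_aux 0 a). simpl; rewrite Rmult_0_l, Rplus_0_l; split; nra.
    unfold G. simpl INR. rewrite Rmult_0_l, Rminus_0_r.
    replace (a^2-a^2) with 0 by ring.
    assert (h*a > 0) by (apply Rmult_lt_0_compat; lra). assert (h*a < PI/2) by (rewrite Rmult_comm; lra). assert (cos (h*a) > 0) by (apply cos_gt_0; lra). rewrite Rmult_0_r. assert (2*a*a*cos (h*a) > 0) by (repeat apply Rmult_lt_0_compat; lra). lra.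
  - apply (solB_aux (S k) (INR (S k) * PI / h)).
    + replace (h * (INR (S k) * PI / h)) with (INR (S k) * PI) by (field; lra). lra.
    + unfold G. replace (h * (INR (S k) * PI / h) - INR (S k) * PI) with 0 by (field; lra).
      rewrite sin_0, cos_0.
      assert (INR (S k) > 0) by (apply lt_0_INR; lia).
      assert (INR (S k) * PI / h > 0) by (apply Rdiv_lt_0_compat; nra).
      nra.
Qed.
End S3.

Lemma nat_step i j : (i < j)%nat -> INR i + 1 <= INR j.
Proof. intros. rewrite <- S_INR. apply le_INR. lia. Qed.

Section S4.
Variables a h : R.
Hypothesis ha : 0 < a.
Hypothesis hh0 : 0 < h.
Hypothesis hah : a * h < PI / 2.

Lemma solE alpha k : is_pos_sol a h alpha -> INR k * PI < h * alpha < INR k * PI + PI / 2 ->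
  forall q, (is_pos_sol a h q /\ q < alpha) <-> (is_pos_sol a h q /\ h * q < INR k * PI).
Proof.
  intros Sa Ka q. pose proof PI_RGT_0 as HP. split.
  - intros [Sq Lq]. split; auto.
    destruct (solA a h ha hh0 hah q Sq) as [i Ki].
    destruct (lt_eq_lt_dec i k) as [[Hi|Hi]|Hi].
    + pose proof (nat_step i k Hi). nra.
    + subst. pose proof (solC a h ha hh0 q alpha k Sq Sa Ki Ka). lra.
    + pose proof (nat_step k i Hi). assert (h*q < h*alpha) by (apply Rmult_lt_compat_l; lra). nra.
  - intros [Sq Lq]. split; auto.
    assert (h*q < h*alpha) by lra. nra.
Qed.

Lemma solD j : exists l, NoDup l /\ length l = j /\
  forall q, In q l <-> (is_pos_sol a h q /\ h * q < INR j * PI).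
Proof.
  pose proof PI_RGT_0 as HP.
  induction j as [|j [l [N [Ln M]]]].
  - exists nil. split; [constructor|]. split; [reflexivity|].
    intros q. simpl. split; [tauto|].
    intros [Sq Lq]. assert (0 < q) by apply Sq. rewrite Rmult_0_l in Lq. nra.
  - destruct (solB a h ha hh0 hah j) as [s [Ss Ks]].
    exists (s :: l). split; [|split].
    + constructor; auto. intro I. apply M in I. lra.
    + simpl; lia.
    + intros q. rewrite S_INR. simpl. split.
      * intros [E|I]. subst; split; auto; lra.
        apply M in I. destruct I; split; auto; lra.
      * intros [Sq Lq].
        destruct (solA a h ha hh0 hah q Sq) as [i Ki].
        destruct (lt_eq_lt_dec i j) as [[Hi|Hi]|Hi].
        -- right. apply M. split; auto. pose proof (nat_step i j Hi). nra.
        -- rewrite Hi in Ki. left. apply (solC a h ha hh0 s q j Ss Sq Ks Ki).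
        -- pose proof (nat_step j i Hi). nra.
Qed.
End S4.

Theorem lemma3p2 (a h : R) (ha : 0 < a) (hh0 : 0 < h) (hh1 : h < PI / (2 * a)) :
  forall m : nat, (2 <= m)%nat ->
    (exists alpha, is_mth_pos_sol a h m alpha) /\
    (forall alpha, is_mth_pos_sol a h m alpha ->
       INR (m - 1) * PI / h <= alpha <= INR (m - 1) * PI / h + PI / (2 * h)).
Proof.
  intros m Hm. pose proof PI_RGT_0 as HP.
  assert (hah : a * h < PI / 2).
  { assert (h * (2*a) < PI / (2*a) * (2*a)) by (apply Rmult_lt_compat_r; lra).
    replace (PI / (2*a) * (2*a)) with PI in H by (field; lra). lra. }
  split.
  - destruct (solB a h ha hh0 hah (m-1)) as [s [Ss Ks]].
    destruct (solD a h ha hh0 hah (m-1)) as [l [N [Ln M]]].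
    exists s. split; auto. exists l. split; auto. split; auto.
    intros q. rewrite (solE a h ha hh0 hah s (m-1) Ss Ks q). apply M.
  - intros alpha [Sa [l [N [Ln M]]]].
    destruct (solA a h ha hh0 hah alpha Sa) as [k Ka].
    destruct (solD a h ha hh0 hah k) as [l' [N' [Ln' M']]].
    assert (Mq: forall q, In q l <-> In q l').
    { intros q. rewrite M, M'. apply (solE a h ha hh0 hah alpha k Sa Ka). }
    assert (length l <= length l')%nat by (apply NoDup_incl_length; auto; intros q; apply Mq).
    assert (length l' <= length l)%nat by (apply NoDup_incl_length; auto; intros q; apply Mq).
    assert (Hk: k = (m-1)%nat) by lia. rewrite Hk in Ka.
    split.
    + apply Rlt_le. apply Rmult_lt_reg_l with h; auto.
      replace (h * (INR (m-1) * PI / h)) with (INR (m-1) * PI) by (field; lra). lra.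
    + apply Rlt_le. apply Rmult_lt_reg_l with h; auto.
      replace (h * (INR (m-1) * PI / h + PI / (2*h))) with (INR (m-1) * PI + PI/2) by (field; lra). lra.
Qed.
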